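(* Let $x\in\mathbb{R}\setminus\{0\}$ and let $n,r$ be positive integers. Then \begin{enumerate} \item $\displaystyle\sum_{i=0}^{n}\frac{r}{r+i}(-1)^i\binom{n}{i}x^{r+i}=-\left(\sum_{i=1}^{r}x^{r-i}(1-x)^{n+i}\frac{P_i^{r}}{P_i^{n+i}}\right)+\frac{1}{\binom{n+r}{r}}$; \item $\displaystyle\sum_{i=0}^{n}\frac{r}{r+i}\binom{n}{i}x^{r+i}=\left(\sum_{i=1}^{r}(-1)^{i-1}x^{r-i}(1+x)^{n+i}\frac{P_i^{r}}{P_i^{n+i}}\right)+\frac{(-1)^r}{\binom{n+r}{r}}$. \end{enumerate}
   Context: For nonnegative integers $m$ and $i$, $P_i^{m}=m(m-1)\cdots(m-i+1)=\frac{m!}{(m-i)!}$ denotes the number of $i$-permutations of $m$ objects (falling factorial; $P_i^m=0$ if $i>m$). *)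

(* Defs.v *)
From mathcomp Require Import all_boot all_order all_algebra.
From mathcomp Require Export reals.
Set Implicit Arguments. Unset Strict Implicit. Unset Printing Implicit Defensive.

Definition perm_count (m i : nat) : nat := m ^_ i.

(* Main.v *)
Require Import Defs.
From mathcomp Require Import all_boot all_order all_algebra.
From mathcomp Require Import reals.
From mathcomp Require Import ring lra zify.
Import Order.TTheory GRing.Theory Num.Theory.
Local Open Scope ring_scope.

Section S.
Variable R : realType.
Variables n r : nat.
Hypothesis hn : (0 < n)%N.
Hypothesis hr : (0 < r)%N.

Definition cc i : R := (r ^_ i)%:R / ((n+i) ^_ i)%:R.
Definition Ap j : {poly R} := ((r-j)%:R * cc j) *: ('X^((r-j).-1) * (1-'X)^+(n+j)).
Definition Tp : {poly R} := \sum_(0 <= j < r) cc j.+1 *: ('X^(r - j.+1) * (1-'X)^+(n+j.+1)).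
Definition Fp : {poly R} := \sum_(0 <= i < n.+1) (r%:R/(r+i)%:R * (-1)^+i * ('C(n,i))%:R) *: 'X^(r+i).

Lemma ffne0 i : ((n+i) ^_ i)%:R != 0 :> R.
Proof. by rewrite pnatr_eq0 -lt0n ffact_gt0 leq_addl. Qed.

Lemma cc_rec j : (j < r)%N -> (r - j)%:R * cc j = (n + j.+1)%:R * cc j.+1.
Proof.
move=> hj; rewrite /cc addnS ffactSS ffactnSr !natrM.
have h1 := ffne0 j.
have h2 : 1 + (n%:R + j%:R) != 0 :> R by rewrite -natrD nat1r pnatr_eq0.
field. by rewrite h1 h2.
Qed.

Lemma dT : Tp^`() = Ap r - Ap 0.
Proof.
rewrite /Tp raddf_sum /= -telescope_sumr //.
apply: eq_big_nat => j /andP[_ hj].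
rewrite derivZ derivM derivXn deriv_exp derivB derivX.
have d1 : (1 : {poly R})^`() = 0 by rewrite -polyC1 derivC.
rewrite d1.
rewrite /Ap (cc_rec j hj) -(subnS r j) addnS /=.
rewrite -!mul_polyC !polyCM !polyC_natr /=.

ring.
Qed.

End S.
Section S2.
Variable R : realType.
Variables n r : nat.
Hypothesis hn : (0 < n)%N.
Hypothesis hr : (0 < r)%N.
Lemma dF : (Fp R n r)^`() = Ap R n r 0.
Proof.
rewrite /Ap subn0 /cc ffactn0 addn0 ffactn0 divr1 mulr1.
case: r hr => // r' _.
rewrite /Fp raddf_sum /= big_mkord (addrC 1) exprD1n mulr_sumr scaler_sumr.
apply: eq_bigr => i _.
rewrite derivZ derivXn addSn /= exprD -scaleN1r exprZn -!scaler_nat !scalerA -!scalerAr !scalerA.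
congr (_ *: _).
field; by rewrite -natrD nat1r pnatr_eq0.
Qed.
End S2.
Lemma deriv0_const (R : numFieldType) (p : {poly R}) : p^`() = 0 -> p = (p`_0)%:P.
Proof.
move=> h; apply/polyP => i; rewrite coefC; case: i => [|j] //=.
have := congr1 (fun q : {poly R} => q`_j) h; rewrite coef_deriv coef0 => /eqP.
by rewrite mulrn_eq0 /= => /eqP.
Qed.

Section S3.
Variable R : realType.
Variables n r : nat.
Hypothesis hn : (0 < n)%N.
Hypothesis hr : (0 < r)%N.
Lemma part1 (x : R) :
  \sum_(0 <= i < n.+1)
      (r%:R / (r + i)%:R) * (-1) ^+ i * ('C(n, i))%:R * x ^+ (r + i)
   = - (\sum_(1 <= i < r.+1)
          x ^+ (r - i) * (1 - x) ^+ (n + i)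
          * ((r ^_ i)%:R / ((n + i) ^_ i)%:R))
     + 1 / ('C(n + r, r))%:R.
Proof.
set G := Fp R n r + Tp R n r.
have dG : G^`() = 0.
  have A0 : Ap R n r r = 0 by rewrite /Ap subnn mul0r scale0r.
  by rewrite /G derivD dF // dT // A0 sub0r addrN.
have hG := deriv0_const _ _ dG.
have Gx : G.[x] = G.[0] by rewrite hG hornerC horner_coef0 coefC.
move: Gx; rewrite /G !hornerD /Fp /Tp !horner_sum.
have [r' er] : exists r', r = r'.+1 by case: (r) hr => // r' _; exists r'.
have ccr : cc R n r r = 1 / ('C(n + r, r))%:R.
  rewrite /cc ffactnn -bin_ffact natrM.
  have h1 : ('C(n + r, r))%:R != 0 :> R by rewrite pnatr_eq0 -lt0n bin_gt0 leq_addl.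
  have h2 : (r`!)%:R != 0 :> R by rewrite pnatr_eq0 -lt0n fact_gt0.
  by field; rewrite h1 h2.
have F0 : \sum_(0 <= i < n.+1)
     ((r%:R / (r + i)%:R * (-1) ^+ i * 'C(n, i)%:R) *: 'X^(r + i)).[0] = 0 :> R.
  by rewrite big1 // => i _; rewrite hornerZ hornerXn er addSn exprS mul0r mulr0.
have T0 : \sum_(0 <= i < r)
     (cc R n r i.+1 *: ('X^(r - i.+1) * (1 - 'X) ^+ (n + i.+1))).[0] = 1 / ('C(n + r, r))%:R.
  rewrite -ccr {1 3}er big_nat_recr //= big1_seq ?add0r.
    by rewrite -er subnn !hornerE /= subr0 expr1n !mulr1.
  move=> k; rewrite mem_index_iota => /andP[_ hi].
  by rewrite !hornerE er subSS -(subnSK hi) exprS mul0r /= mulr0 mul0r.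
have Fx : \sum_(0 <= i < n.+1)
     ((r%:R / (r + i)%:R * (-1) ^+ i * 'C(n, i)%:R) *: 'X^(r + i)).[x] =
   \sum_(0 <= i < n.+1)
      (r%:R / (r + i)%:R) * (-1) ^+ i * ('C(n, i))%:R * x ^+ (r + i).
  by apply: eq_bigr => i _; rewrite hornerZ hornerXn.
have Tx : \sum_(0 <= i < r)
     (cc R n r i.+1 *: ('X^(r - i.+1) * (1 - 'X) ^+ (n + i.+1))).[x] =
   \sum_(1 <= i < r.+1)
          x ^+ (r - i) * (1 - x) ^+ (n + i)
          * ((r ^_ i)%:R / ((n + i) ^_ i)%:R).
  rewrite big_add1 /=; apply: eq_bigr => i _; rewrite !hornerE /cc /=; ring.
rewrite Fx Tx F0 T0 => h; lra.
Qed.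
End S3.

Lemma sgsq (R : realType) k : ((-1 : R) ^+ k) * ((-1) ^+ k) = 1.
Proof. by rewrite -exprMn mulrNN mulr1 expr1n. Qed.

Theorem mainTheorem7 (R : realType) (x : R) (n r : nat)
  (hx : x != 0) (hn : (0 < n)%N) (hr : (0 < r)%N) :
  (\sum_(0 <= i < n.+1)
      (r%:R / (r + i)%:R) * (-1) ^+ i * ('C(n, i))%:R * x ^+ (r + i)
   = - (\sum_(1 <= i < r.+1)
          x ^+ (r - i) * (1 - x) ^+ (n + i)
          * ((perm_count r i)%:R / (perm_count (n + i) i)%:R))
     + 1 / ('C(n + r, r))%:R)
  /\
  (\sum_(0 <= i < n.+1)
      (r%:R / (r + i)%:R) * ('C(n, i))%:R * x ^+ (r + i)
   = (\sum_(1 <= i < r.+1)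
          (-1) ^+ (i - 1) * x ^+ (r - i) * (1 + x) ^+ (n + i)
          * ((perm_count r i)%:R / (perm_count (n + i) i)%:R))
     + (-1) ^+ r / ('C(n + r, r))%:R).
Proof.
rewrite /perm_count; split; first exact: (@part1 R n r hr).
have h := @part1 R n r hr (-x).
rewrite opprK in h.
set S1 := \sum_(0 <= i < n.+1) _ in h.
set T1 := \sum_(1 <= i < r.+1) _ in h.
have eS : \sum_(0 <= i < n.+1)
      (r%:R / (r + i)%:R) * ('C(n, i))%:R * x ^+ (r + i) = (-1) ^+ r * S1.
  rewrite /S1 big_distrr; apply: eq_bigr => i _.
  have key : (-1) ^+ r * ((-1) ^+ i * (-1) ^+ (r + i)) = 1 :> R.
    have e : (r + (i + (r + i)) = (r + i) * 2)%N by lia.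
    by rewrite -!exprD e exprM expr2 sgsq.
  rewrite /= [(- x) ^+ _]exprNn.
  have -> : (-1) ^+ r * (r%:R / (r + i)%:R * (-1) ^+ i * 'C(n, i)%:R * ((-1) ^+ (r + i) * x ^+ (r + i)))
     = ((-1) ^+ r * ((-1) ^+ i * (-1) ^+ (r + i))) * (r%:R / (r + i)%:R * 'C(n, i)%:R * x ^+ (r + i)) :> R by ring.
  by rewrite key mul1r.
have eT : \sum_(1 <= i < r.+1)
          (-1) ^+ (i - 1) * x ^+ (r - i) * (1 + x) ^+ (n + i)
          * ((r ^_ i)%:R / ((n + i) ^_ i)%:R) = (-1) ^+ r * (- T1).
  rewrite mulrN -mulNr /T1 big_distrr; apply: eq_big_nat => i /andP[hi1 hi2].
  have key : - (-1) ^+ r * (-1) ^+ (r - i) = (-1) ^+ (i - 1) :> R.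
    have e1 : (-1) ^+ r = (-1) ^+ (r - i) * (-1) ^+ i :> R by rewrite -exprD subnK.
    have e2 : (-1) ^+ i = - (-1) ^+ (i - 1) :> R.
      by rewrite -[in LHS](subnK hi1) exprD expr1 mulrN1.
    by rewrite e1 e2 mulrN opprK mulrAC sgsq mul1r.
  rewrite /= [(- x) ^+ _]exprNn.
  have -> : - (-1) ^+ r * ((-1) ^+ (r - i) * x ^+ (r - i) * (1 + x) ^+ (n + i) * ((r ^_ i)%:R / ((n + i) ^_ i)%:R))
     = (- (-1) ^+ r * (-1) ^+ (r - i)) * (x ^+ (r - i) * (1 + x) ^+ (n + i) * ((r ^_ i)%:R / ((n + i) ^_ i)%:R)) :> R by ring.
  by rewrite key; ring.
rewrite eS eT h; ring.
Qed.
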